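(* Let $\ell\ge2$, $r_0,\dots,r_\ell\ge1$ integers, $d_0,\dots,d_\ell$ integers with $d_V=\sum_kd_k=0$, and $\mathbf{g}\ge1$ an integer. For every real $c>\max_k\mu_k$ there is a real number $\Phi(c)>0$ with $\mathring{\mathfrak{F}}(c)=(\mu_0-\mu_1)\Phi(c)$, where $\mathring{\mathfrak{F}}(c)$ is defined in the context. In particular, if $\mathring{\mathfrak{F}}(c)>0$ then $\mu_0>\mu_1$.
   Context: $\mu_k=d_k/r_k$, $r_V=\sum_kr_k$, $\pi_R=\prod_k(r_k-1)!$. For $1\le j\ne k\le\ell$: $\alpha_0=\frac{\pi_R}{r_V!}(cr_V-d_V)$, $\alpha_j=\frac{\pi_R}{(r_V+1)!}r_j(c(r_V+1)-d_V-\mu_j)$, $\alpha_{jk}=\frac{\pi_R}{(r_V+2)!}r_jr_k(c(r_V+2)-d_V-\mu_j-\mu_k)$, $\alpha_{jj}=\frac{\pi_R}{(r_V+2)!}r_j(r_j+1)(c(r_V+2)-d_V-2\mu_j)$, $\beta_0=\frac{\pi_R}{(r_V-1)!}((r_V-1)r_Vc+2(1-\mathbf{g})-(r_V-1)d_V)$, $\beta_j=\frac{\pi_Rr_j}{r_V!}(r_V(r_V-1)c+2(1-\mathbf{g})-d_V(r_V-2)-r_V\mu_j)$. $A_{ij}=\alpha_{ij}-\alpha_i\alpha_j/\alpha_0$ for $2\le i,j\le\ell$ (invertible for $c>\max\mu_k$), and $\mathring{\mathfrak{F}}(c)=(\alpha_0\beta_1-\alpha_1\beta_0)-\sum_{j,r=2}^\ell(A^{-1})_{rj}(\alpha_0\beta_r-\alpha_r\beta_0)\big(\alpha_{j1}-\frac{\alpha_1\alpha_j}{\alpha_0}\big)$.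 (When $V_0=U_0/L$, $V_1=L$ arise from the test configuration of a subbundle $L$ of an indecomposable summand $U_0$ of $E$ over a curve of genus $\ge1$, normalized so that $\deg E=0$, $\mathring{\mathfrak{F}}(c)$ at $c=m$ is a positive multiple of the relative Donaldson–Futaki invariant for the polarization $\mathcal{O}(1)_{\mathbb{P}(E)}\otimes\mathcal{O}(m)_C$.) *)

(* Defs.v *)
From HB Require Import structures.
From mathcomp Require Import all_boot all_order all_algebra.
From mathcomp Require Import reals.
Set Implicit Arguments. Unset Strict Implicit. Unset Printing Implicit Defensive.
Import Order.TTheory GRing.Theory Num.Theory.
Local Open Scope ring_scope.

Section Ffrak.
Variables (R : realType) (l : nat) (r : nat -> nat) (d : nat -> int)
          (g : nat) (c : R).

Definition mu (k : nat) : R := (d k)%:~R / (r k)%:R.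
Definition rV : nat := (\sum_(k < l.+1) r k)%N.
Definition dV : R := (\sum_(k < l.+1) d k)%:~R.
Definition piR : R := (\prod_(k < l.+1) ((r k).-1)`!)%N%:R.

Definition alpha0 : R := piR / (rV`!)%:R * (c * rV%:R - dV).
Definition alpha1 (j : nat) : R :=
  piR / (rV.+1`!)%:R * (r j)%:R * (c * (rV.+1)%:R - dV - mu j).
Definition alpha2 (j k : nat) : R :=
  if j == k then
    piR / (rV.+2`!)%:R * (r j)%:R * ((r j)%:R + 1)
      * (c * (rV.+2)%:R - dV - 2 * mu j)
  else
    piR / (rV.+2`!)%:R * (r j)%:R * (r k)%:R
      * (c * (rV.+2)%:R - dV - mu j - mu k).
Definition beta0 : R :=
  piR / ((rV.-1)`!)%:R
    * ((rV%:R - 1) * rV%:R * c + 2 * (1 - g%:R) - (rV%:R - 1) * dV).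
Definition beta1 (j : nat) : R :=
  piR * (r j)%:R / (rV`!)%:R
    * (rV%:R * (rV%:R - 1) * c + 2 * (1 - g%:R) - dV * (rV%:R - 2)
       - rV%:R * mu j).

(* A_{ij}, 2 <= i,j <= l; the index i : 'I_(l-1) stands for i+2 *)
Definition Amx : 'M[R]_(l.-1) :=
  \matrix_(i < l.-1, j < l.-1)
    (alpha2 i.+2 j.+2 - alpha1 i.+2 * alpha1 j.+2 / alpha0).

Definition Ffrak : R :=
  (alpha0 * beta1 1 - alpha1 1 * beta0)
  - \sum_(j < l.-1) \sum_(s < l.-1)
      invmx Amx s j * (alpha0 * beta1 s.+2 - alpha1 s.+2 * beta0)
        * (alpha2 j.+2 1 - alpha1 1 * alpha1 j.+2 / alpha0).

End Ffrak.

Arguments mu {R} r d k.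
Arguments Ffrak {R} l r d g c.

(* Main.v *)
Require Import Defs.
From HB Require Import structures.
From mathcomp Require Import all_boot all_order all_algebra.
From mathcomp Require Import reals.
From mathcomp Require Import ring lra.
Import Order.TTheory GRing.Theory Num.Theory.
Set Implicit Arguments. Unset Strict Implicit. Unset Printing Implicit Defensive.
Local Open Scope ring_scope.

Lemma alg_kernel (R : realFieldType) (C nn S1 r0 r1 m0 m1 E F G0 G1 : R) :
  0 < C -> 0 < nn -> 0 < r0 -> 0 < r1 -> 0 < C - 2 * m0 -> 0 < C - 2 * m1 ->
  0 < (nn + 2*S1)/C -> 0 < 1 + nn - nn*S1/2 ->
  r0*G0 + r1*G1 = 0 ->
  r0*G0/(C-2 * m0) + r1*G1/(C-2 * m1) = E*(1 + C*((nn+2*S1)/C) - S1) - (nn+2*S1)/C*F ->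
  r0 * m0*G0/(C-2 * m0) + r1 * m1*G1/(C-2 * m1) = E*C*S1/2 + (1-S1)*F ->
  (F - (C-m0)*E + G0)/(C-2 * m0) = (F - (C-m1)*E + G1)/(C-2 * m1) ->
  G1 = 0 /\ E = 0 /\ F = 0.
Proof.
move=> hC hn hr0 hr1 ha0 ha1 hS0 hD hG Eq1 Eq2 Ee.
have nC : C != 0 by rewrite gt_eqF.
have nr0 : r0 != 0 by rewrite gt_eqF.
have na0 : C - 2 * m0 != 0 by rewrite gt_eqF.
have na1 : C - 2 * m1 != 0 by rewrite gt_eqF.
have nD : 1 + nn - nn*S1/2 != 0 by rewrite gt_eqF.
have nD2 : (1 + nn) * 2 - nn * S1 != 0 by rewrite gt_eqF //; lra.
have nS0 : nn + 2*S1 != 0.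
  apply/eqP => h; move: hS0; rewrite h mul0r ltxx //.
pose s := G1 / r0.
have hG1 : G1 = r0 * s by rewrite /s; field.
have hG0 : G0 = - r1 * s.
  apply: (mulfI nr0); rewrite hG1 in hG; move/eqP: hG; rewrite addr_eq0 => /eqP ->.
  ring.
rewrite hG0 hG1 in Eq1 Eq2 Ee *.
pose dl := r0 * r1 * (m1 - m0) / ((C - 2 * m0) * (C - 2 * m1)).
pose D := 1 + nn - nn*S1/2.
have hD' : 0 < D by [].
have hE : E = s * (nn + 2) * dl / D.
  have k1 : E * D - s * (nn + 2) * dl =
    (1 - S1) * ((E*(1 + C*((nn+2*S1)/C) - S1) - (nn+2*S1)/C*F)
               - (r0*(-r1*s)/(C-2 * m0) + r1*(r0*s)/(C-2 * m1)))
    + (nn+2*S1)/C * ((E*C*S1/2 + (1-S1)*F)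
               - (r0 * m0*(-r1*s)/(C-2 * m0) + r1 * m1*(r0*s)/(C-2 * m1))).
    by rewrite /D /dl; field; rewrite ?na0 ?na1 ?nC ?nD ?nS0 ?nr0 ?nD2.
  rewrite -Eq1 -Eq2 !subrr !mulr0 addr0 in k1.
  apply: (mulIf nD); rewrite -/D; move/eqP: k1; rewrite subr_eq0 => /eqP ->.
  by rewrite /D; field; rewrite ?na0 ?na1 ?nC ?nD ?nS0 ?nr0 ?nD2.
have hF : F = C * s * dl * (nn + 1) / D.
  have k2 : (nn+2*S1)/C * (F - C * s * dl * (nn + 1) / D) =
     (E - s * (nn + 2) * dl / D) * (1 + C*((nn+2*S1)/C) - S1)
     - ((E*(1 + C*((nn+2*S1)/C) - S1) - (nn+2*S1)/C*F)
               - (r0*(-r1*s)/(C-2 * m0) + r1*(r0*s)/(C-2 * m1))).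
    by rewrite /D /dl; field; rewrite ?na0 ?na1 ?nC ?nD ?nS0 ?nr0 ?nD2.
  rewrite -Eq1 subrr subr0 -hE subrr mul0r in k2.
  move/eqP: k2; rewrite mulf_eq0 (negbTE (lt0r_neq0 hS0)) /= subr_eq0 => /eqP //.
pose t := r0/(C-2 * m1) + r1/(C-2 * m0)
   + (m1-m0)^+2 * (r0 * r1 * C * nn) / (((C-2 * m0)^+2 * (C-2 * m1)^+2) * D).
have ht : 0 < t.
  have hA : 0 < r0 / (C - 2 * m1) by apply: divr_gt0.
  have hB : 0 < r1 / (C - 2 * m0) by apply: divr_gt0.
  have hCc : 0 <= (m1-m0)^+2 * (r0 * r1 * C * nn) / (((C-2 * m0)^+2 * (C-2 * m1)^+2) * D).
    apply: divr_ge0; apply: mulr_ge0; first exact: sqr_ge0.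
      by rewrite !mulr_ge0 // ltW.
    by apply: mulr_ge0; exact: sqr_ge0.
    exact: ltW.
  rewrite /t; lra.
have k3 : (F - (C-m1)*E + r0*s)/(C-2 * m1) - (F - (C-m0)*E + -r1*s)/(C-2 * m0) = s * t.
  by rewrite hE hF /t /D /dl; field; rewrite ?na0 ?na1 ?nC ?nD ?nS0 ?nr0 ?nD2.
rewrite Ee subrr in k3.
have s0 : s = 0.
  by move/esym/eqP: k3; rewrite mulf_eq0 (negbTE (lt0r_neq0 ht)) orbF => /eqP.
rewrite hE hF s0 !(mul0r, mulr0) /=; do !split; by rewrite ?(mul0r, mulr0).
Qed.

Section Main.
Variables (R : realType) (m : nat) (r : nat -> nat) (d : nat -> int) (g : nat) (c : R).
Local Notation l := m.+2.
Hypothesis Hr : forall k, (k <= l)%N -> (1 <= r k)%N.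
Hypothesis Hd : (\sum_(k < l.+1) d k = 0)%R.
Hypothesis Hg : (1 <= g)%N.
Hypothesis Hc : forall k, (k <= l)%N -> mu r d k < c.

Local Notation mu_ := (@mu R r d).
Local Notation n := (rV l r).
Let rr k : R := (r k)%:R.
Let nR : R := n%:R.
Let C : R := c * (n.+2)%:R.
Let Q : R := piR R l r / (n`!)%:R.
Let K : R := piR R l r / (n.+2`!)%:R.
Let a k : R := C - 2 * mu_ k.
Let Ev (e : nat -> R) := \sum_(k < l.+1) rr k * e k.
Let Fv (e : nat -> R) := \sum_(k < l.+1) rr k * mu_ k * e k.
Let S0 := \sum_(k < l.+1) rr k / a k.
Let S1 := \sum_(k < l.+1) rr k * mu_ k / a k.

Lemma sum_split (f : nat -> R) :
  \sum_(k < l.+1) f k = f 0%N + f 1%N + \sum_(j < m.+1) f j.+2.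
Proof. by rewrite 2!big_ord_recl addrA. Qed.

Lemma sum_delta i (e : nat -> R) : (i <= l)%N ->
  \sum_(k < l.+1) (i == k)%:R * e k = e i.
Proof.
move=> hi; have hi' : (i < l.+1)%N by [].
rewrite (bigD1 (Ordinal hi')) //= eqxx mul1r big1 ?addr0 // => k hk.
suff -> : (i == k) = false by rewrite mul0r.
apply/negP => /eqP hik; move: hk; rewrite -val_eqE /= hik eqxx //.
Qed.

Lemma jle (j : 'I_m.+1) : (j.+2 <= l)%N.
Proof. exact: (ltn_ord j). Qed.

Lemma rr_pos k : (k <= l)%N -> 0 < rr k.
Proof. by move=> /Hr hk; rewrite /rr ltr0n. Qed.

Lemma dV0 : dV R l d = 0.
Proof. by rewrite /dV Hd. Qed.

Lemma rmu k : (k <= l)%N -> rr k * mu_ k = (d k)%:~R.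
Proof.
move=> hk; have := rr_pos hk; rewrite /mu /rr => h; field.
by rewrite gt_eqF.
Qed.

Lemma sum_r : \sum_(k < l.+1) rr k = nR.
Proof. by rewrite /nR /rV natr_sum. Qed.

Lemma sum_rmu : \sum_(k < l.+1) rr k * mu_ k = 0.
Proof.
rewrite (eq_bigr (fun k : 'I_l.+1 => (d k)%:~R)); last first.
  by move=> k _; rewrite rmu // -ltnS.
by rewrite -rmorph_sum /= Hd.
Qed.

Lemma n_pos : 0 < nR.
Proof.
rewrite -sum_r sum_split; have := rr_pos (isT : (0 <= l)%N).
have := rr_pos (isT : (1 <= l)%N).
have : 0 <= \sum_(j < m.+1) rr j.+2 by apply: sumr_ge0 => j _; apply/ltW/rr_pos/jle.
lra.
Qed.

Lemma c_pos : 0 < c.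
Proof.
have h : \sum_(k < l.+1) rr k * (c - mu_ k) = nR * c.
  under eq_bigr => k _ do rewrite mulrBr.
  by rewrite sumrB sum_rmu subr0 -mulr_suml sum_r.
have : 0 < \sum_(k < l.+1) rr k * (c - mu_ k).
  rewrite (sum_split (fun k => rr k * (c - mu_ k))).
  have h0 : 0 < rr 0 * (c - mu_ 0) by rewrite mulr_gt0 ?rr_pos ?subr_gt0 ?Hc.
  have h1 : 0 < rr 1 * (c - mu_ 1) by rewrite mulr_gt0 ?rr_pos ?subr_gt0 ?Hc.
  have : 0 <= \sum_(j < m.+1) rr j.+2 * (c - mu_ j.+2).
    by apply: sumr_ge0 => j _; rewrite mulr_ge0 // ?ltW ?rr_pos ?subr_gt0 ?Hc ?jle.
  lra.
by rewrite h pmulr_rgt0 // n_pos.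
Qed.

Lemma nR1 : (n.+1)%:R = nR + 1 :> R.
Proof. by rewrite /nR -addn1 natrD. Qed.
Lemma nR2 : (n.+2)%:R = nR + 2 :> R.
Proof. by rewrite /nR -addn2 natrD. Qed.

Lemma C_E : C = c * nR + 2 * c.
Proof. by rewrite /C nR2; ring. Qed.

Lemma a_pos k : (k <= l)%N -> 0 < a k.
Proof.
move=> hk; have := Hc hk; have := mulr_gt0 c_pos n_pos; rewrite /a C_E; lra.
Qed.

Lemma a_neq0 k : (k <= l)%N -> a k != 0.
Proof. by move=> hk; rewrite gt_eqF // a_pos. Qed.

Lemma piR_pos : 0 < piR R l r.
Proof. by rewrite /piR ltr0n; apply: prodn_gt0 => i; apply: fact_gt0. Qed.

Lemma fact_neq0 k : (k`!)%:R != 0 :> R.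
Proof. by rewrite pnatr_eq0 -lt0n fact_gt0. Qed.

Lemma KQ : K = Q / ((nR + 1) * (nR + 2)).
Proof.
rewrite /K /Q !factS !natrM nR1 nR2.
have := n_pos => hn; have := fact_neq0 n => hf.
field; rewrite hf /=; apply/andP; split; rewrite gt_eqF //; lra.
Qed.

Lemma Q_pos : 0 < Q.
Proof. by rewrite /Q divr_gt0 // ?piR_pos // ltr0n fact_gt0. Qed.

Lemma K_pos : 0 < K.
Proof. by rewrite KQ divr_gt0 ?Q_pos // mulr_gt0 //; have := n_pos; lra. Qed.

Lemma alpha2E j k : alpha2 l r d c j k =
  K * rr j * (rr k * (C - mu_ j - mu_ k) + (j == k)%:R * (C - 2 * mu_ j)).
Proof.
rewrite /alpha2 dV0 -/K -/C /rr; case: eqP => [->|_]; rewrite ?mulr1n ?mulr0n; ring.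
Qed.

Lemma alpha2C j k : alpha2 l r d c j k = alpha2 l r d c k j.
Proof.
rewrite !alpha2E; case: (eqVneq j k) => [->//|hne].
by rewrite /= ?mulr0n; ring.
Qed.

Lemma alpha1E j : alpha1 l r d c j = K * rr j * ((nR + 1) * C - (nR + 2) * mu_ j).
Proof.
rewrite /alpha1 dV0 -/K /rr KQ /Q factS natrM nR1 /C nR2.
have := n_pos => hn; have := fact_neq0 n => hf.
field; rewrite hf /=; apply/andP; split; rewrite gt_eqF //; lra.
Qed.

Lemma alpha0E : alpha0 l r d c = K * nR * (nR + 1) * C.
Proof.
rewrite /alpha0 dV0 KQ /Q -/nR /C nR2.
have := n_pos => hn; have := fact_neq0 n => hf.
field; rewrite hf /=; apply/andP; split; rewrite gt_eqF //; lra.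
Qed.

Lemma alpha0_pos : 0 < alpha0 l r d c.
Proof.
rewrite alpha0E C_E; have h1 := K_pos; have h2 := n_pos; have h3 := c_pos.
have h4 := mulr_gt0 c_pos n_pos.
apply: mulr_gt0; last lra.
apply: mulr_gt0; last lra.
by apply: mulr_gt0.
Qed.

Lemma beta1E j : beta1 l r d g c j =
  Q * rr j * (nR * (nR - 1) * c + 2 * (1 - g%:R) - nR * mu_ j).
Proof. by rewrite /beta1 dV0 -/nR /rr /Q; ring. Qed.

Lemma beta0E : beta0 l r d g c = Q * nR * ((nR - 1) * nR * c + 2 * (1 - g%:R)).
Proof.
have hn : (0 < n)%N by rewrite -(ltr0n R) n_pos.
have hf : (n`!)%:R = nR * ((n.-1)`!)%:R :> R.
  by rewrite /nR -natrM -{1}(prednK hn) factS prednK.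
rewrite /beta0 dV0 -/nR /Q hf.
have := n_pos => hnp; have := fact_neq0 n.-1 => hf'.
field; rewrite hf' /=; rewrite gt_eqF //.
Qed.


Let G (e : nat -> R) k := (C - mu_ k) * Ev e - Fv e + a k * e k.

Lemma a2e i (e : nat -> R) : (i <= l)%N ->
  \sum_(k < l.+1) alpha2 l r d c i k * e k = K * rr i * G e i.
Proof.
move=> hi.
transitivity (\sum_(k < l.+1) (K * rr i * (C - mu_ i) * (rr k * e k)
   - K * rr i * (rr k * mu_ k * e k) + K * rr i * a i * ((i == k)%:R * e k))).
  by apply: eq_bigr => k _; rewrite alpha2E /a; ring.
rewrite big_split sumrB /= -!mulr_sumr sum_delta // /G -/(Ev e) -/(Fv e); ring.
Qed.

Lemma a1e (e : nat -> R) :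
  \sum_(k < l.+1) alpha1 l r d c k * e k = K * ((nR + 1) * C * Ev e - (nR + 2) * Fv e).
Proof.
transitivity (\sum_(k < l.+1) (K * (nR + 1) * C * (rr k * e k)
   - K * (nR + 2) * (rr k * mu_ k * e k))).
  by apply: eq_bigr => k _; rewrite alpha1E; ring.
rewrite sumrB /= -!mulr_sumr -/(Ev e) -/(Fv e); ring.
Qed.

Lemma b1e (e : nat -> R) :
  \sum_(k < l.+1) beta1 l r d g c k * e k =
  Q * ((nR * (nR - 1) * c + 2 * (1 - g%:R)) * Ev e - nR * Fv e).
Proof.
transitivity (\sum_(k < l.+1) (Q * (nR * (nR - 1) * c + 2 * (1 - g%:R)) * (rr k * e k)
   - Q * nR * (rr k * mu_ k * e k))).
  by apply: eq_bigr => k _; rewrite beta1E; ring.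
rewrite sumrB /= -!mulr_sumr -/(Ev e) -/(Fv e); ring.
Qed.

Lemma Ev1 : Ev (fun _ => 1) = nR.
Proof. by rewrite /Ev -sum_r; apply: eq_bigr => k _; rewrite mulr1. Qed.

Lemma Fv1 : Fv (fun _ => 1) = 0.
Proof. by rewrite /Fv -[RHS]sum_rmu; apply: eq_bigr => k _; rewrite mulr1. Qed.

Lemma sum_a2 i : (i <= l)%N -> \sum_(k < l.+1) alpha2 l r d c i k = alpha1 l r d c i.
Proof.
move=> hi; have := a2e (fun _ => 1) hi.
under eq_bigr => k _ do rewrite mulr1.
by move=> ->; rewrite /G Ev1 Fv1 alpha1E /a; ring.
Qed.

Lemma sum_a1 : \sum_(k < l.+1) alpha1 l r d c k = alpha0 l r d c.
Proof.
have := a1e (fun _ => 1).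
under eq_bigr => k _ do rewrite mulr1.
by move=> ->; rewrite Ev1 Fv1 alpha0E; ring.
Qed.

Lemma sum_b1 : \sum_(k < l.+1) beta1 l r d g c k = beta0 l r d g c.
Proof.
have := b1e (fun _ => 1).
under eq_bigr => k _ do rewrite mulr1.
by move=> ->; rewrite Ev1 Fv1 beta0E; ring.
Qed.

Lemma S0rel : C * S0 = nR + 2 * S1.
Proof.
rewrite -sum_r /S0 /S1 mulr_sumr mulr_sumr -big_split /=.
apply: eq_bigr => k _; have hk := a_neq0 (ltn_ord k : (k <= l)%N).
rewrite /a in hk *; field => //.
Qed.

Lemma sumG (e : nat -> R) :
  \sum_(k < l.+1) rr k * G e k = (nR + 1) * C * Ev e - (nR + 2) * Fv e.
Proof.
transitivity (\sum_(k < l.+1) ((C * Ev e - Fv e) * rr k - Ev e * (rr k * mu_ k)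
   + (C * (rr k * e k) - 2 * (rr k * mu_ k * e k)))).
  by apply: eq_bigr => k _; rewrite /G /a; ring.
rewrite big_split sumrB /= -!mulr_sumr sumrB -!mulr_sumr sum_r sum_rmu -/(Ev e) -/(Fv e).
ring.
Qed.

Lemma I1 (e : nat -> R) :
  \sum_(k < l.+1) rr k * G e k / a k = Ev e * (1 + C * S0 - S1) - S0 * Fv e.
Proof.
transitivity (\sum_(k < l.+1) ((Ev e / 2) * rr k + (Ev e * C / 2 - Fv e) * (rr k / a k)
   + rr k * e k)).
  apply: eq_bigr => k _; have hk := a_neq0 (ltn_ord k : (k <= l)%N).
  rewrite /G; rewrite /a in hk *; field => //.
rewrite big_split big_split /= -!mulr_sumr sum_r -/S0 -/(Ev e).
apply/eqP; rewrite -subr_eq0; apply/eqP.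
transitivity (- Ev e / 2 * (C * S0 - nR - 2 * S1)); first by field.
rewrite (_ : C * S0 - nR - 2 * S1 = 0) ?mulr0 //; have := S0rel; lra.
Qed.

Lemma I2 (e : nat -> R) :
  \sum_(k < l.+1) rr k * mu_ k * G e k / a k = Ev e * C * S1 / 2 + (1 - S1) * Fv e.
Proof.
transitivity (\sum_(k < l.+1) ((Ev e / 2) * (rr k * mu_ k)
   + (Ev e * C / 2 - Fv e) * (rr k * mu_ k / a k) + rr k * mu_ k * e k)).
  apply: eq_bigr => k _; have hk := a_neq0 (ltn_ord k : (k <= l)%N).
  rewrite /G; rewrite /a in hk *; field => //.
rewrite big_split big_split /= -!mulr_sumr sum_rmu -/S1 -/(Fv e); ring.
Qed.


Lemma S1_le1 : S1 <= 1.
Proof.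
have hn := n_pos.
have -> : 1 = \sum_(k < l.+1) rr k / nR.
  by rewrite -mulr_suml sum_r divff // gt_eqF.
apply: ler_sum => k _; have hk : (k <= l)%N := ltn_ord k.
have ha := a_pos hk; have hr := rr_pos hk.
rewrite (_ : rr k * mu_ k / a k = rr k / nR * (mu_ k * nR / a k)); last first.
  by field; rewrite !gt_eqF.
apply: ler_piMr; first by rewrite ltW // divr_gt0.
rewrite ler_pdivrMr // mul1r /a C_E.
have := ler_wpM2r (ltW hn) (ltW (Hc hk)); have := Hc hk; lra.
Qed.

Lemma S0_pos : 0 < S0.
Proof.
rewrite /S0 (sum_split (fun k => rr k / a k)).
have h0 : 0 < rr 0 / a 0 by rewrite divr_gt0 ?rr_pos ?a_pos.
have h1 : 0 < rr 1 / a 1 by rewrite divr_gt0 ?rr_pos ?a_pos.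
have : 0 <= \sum_(j < m.+1) rr j.+2 / a j.+2.
  by apply: sumr_ge0 => j _; rewrite ltW // divr_gt0 ?rr_pos ?a_pos ?jle.
lra.
Qed.

Lemma D_pos : 0 < 1 + nR - nR * S1 / 2.
Proof.
have hn := n_pos; have := ler_wpM2l (ltW hn) S1_le1; rewrite mulr1; lra.
Qed.

Lemma C_pos : 0 < C.
Proof. by rewrite C_E; have := mulr_gt0 c_pos n_pos; have := c_pos; lra. Qed.

Lemma S0E : S0 = (nR + 2 * S1) / C.
Proof. by rewrite -S0rel; field; rewrite gt_eqF // C_pos. Qed.

Lemma AmxE (i j : 'I_m.+1) : Amx l r d c i j =
  alpha2 l r d c i.+2 j.+2 - alpha1 l r d c i.+2 * alpha1 l r d c j.+2 / alpha0 l r d c.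
Proof. by rewrite /Amx mxE. Qed.

Lemma Amx_unit : Amx l r d c \in unitmx.
Proof.
rewrite unitmxE unitfE; apply/negP => /det0P [v vn0 hv].
move/eqP: vn0; apply.
have A0n : alpha0 l r d c != 0 by rewrite gt_eqF // alpha0_pos.
have Kn : K != 0 by rewrite gt_eqF // K_pos.
pose tau := (\sum_(i < m.+1) alpha1 l r d c i.+2 * v 0 i) / alpha0 l r d c.
pose e := fun k : nat => (if (2 <= k)%N then v 0 (inord (k - 2)) else 0) - tau.
have e0 : e 0%N = - tau by rewrite /e /= sub0r.
have e1 : e 1%N = - tau by rewrite /e /= sub0r.
have e2 : forall j : 'I_m.+1, e j.+2 = v 0 j - tau.
  move=> j; rewrite /e; have -> : (2 <= j.+2)%N by [].
  by rewrite !subSS subn0 inord_val.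
have hj : forall j : 'I_m.+1, \sum_(i < m.+1) v 0 i * alpha2 l r d c i.+2 j.+2 =
     alpha1 l r d c j.+2 * tau.
  move=> j; have := congr1 (fun M : 'rV[R]_(m.+1) => M 0 j) hv; rewrite !mxE.
  under eq_bigr => i _ do rewrite AmxE mulrBr.
  rewrite sumrB => /eqP; rewrite subr_eq0 => /eqP ->.
  rewrite /tau mulr_suml mulr_sumr; apply: eq_bigr => i _; field.
  by rewrite A0n.
have GA : forall j : 'I_m.+1, G e j.+2 = 0.
  move=> j; have := a2e e (jle j).
  rewrite (sum_split (fun k => alpha2 l r d c j.+2 k * e k)) e0 e1.
  under eq_bigr => i _ do rewrite e2 mulrBr.
  rewrite sumrB -mulr_suml.
  have -> : \sum_(i < m.+1) alpha2 l r d c j.+2 i.+2 * v 0 i = alpha1 l r d c j.+2 * tau.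
    by rewrite -hj; apply: eq_bigr => i _; rewrite alpha2C mulrC.
  have := sum_a2 (jle j).
  rewrite (sum_split (fun k => alpha2 l r d c j.+2 k)) => hY.
  have -> : \sum_(i < m.+1) alpha2 l r d c j.+2 i.+2 =
     alpha1 l r d c j.+2 - alpha2 l r d c j.+2 0 - alpha2 l r d c j.+2 1 by rewrite -hY; ring.
  move=> h; have : K * rr j.+2 * G e j.+2 = 0 by rewrite -h; ring.
  have hKr : K * rr j.+2 != 0 by rewrite mulf_neq0 // gt_eqF // rr_pos // jle.
  by move/eqP; rewrite mulf_eq0 (negbTE hKr) /= => /eqP.
have hB : (nR + 1) * C * Ev e - (nR + 2) * Fv e = 0.
  have := a1e e.
  rewrite (sum_split (fun k => alpha1 l r d c k * e k)) e0 e1.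
  under eq_bigr => i _ do rewrite e2 mulrBr.
  rewrite sumrB -mulr_suml.
  have -> : \sum_(i < m.+1) alpha1 l r d c i.+2 * v 0 i = tau * alpha0 l r d c.
    by rewrite /tau; field.
  have := sum_a1; rewrite (sum_split (fun k => alpha1 l r d c k)) => hY.
  have -> : \sum_(i < m.+1) alpha1 l r d c i.+2 =
     alpha0 l r d c - alpha1 l r d c 0 - alpha1 l r d c 1 by rewrite -hY; ring.
  move=> h; have : K * ((nR + 1) * C * Ev e - (nR + 2) * Fv e) = 0 by rewrite -h; ring.
  by move/eqP; rewrite mulf_eq0 (negbTE Kn) /= => /eqP.
have hG01 : rr 0 * G e 0 + rr 1 * G e 1 = 0.
  have := sumG e; rewrite hB (sum_split (fun k => rr k * G e k)) big1; last first.
    by move=> j _; rewrite GA mulr0.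
  by rewrite addr0.
have hI1 := I1 e; rewrite (sum_split (fun k => rr k * G e k / a k)) big1 ?addr0 in hI1;
  last by move=> j _; rewrite GA mulr0 mul0r.
have hI2 := I2 e; rewrite (sum_split (fun k => rr k * mu_ k * G e k / a k)) big1 ?addr0 in hI2;
  last by move=> j _; rewrite GA mulr0 mul0r.
rewrite S0E in hI1.
have ha0 := a_pos (isT : (0 <= l)%N); have ha1 := a_pos (isT : (1 <= l)%N).
have he : (Fv e - (C - mu_ 0) * Ev e + G e 0) / (C - 2 * mu_ 0)
        = (Fv e - (C - mu_ 1) * Ev e + G e 1) / (C - 2 * mu_ 1).
  rewrite /G -/(a 0) -/(a 1) e0 e1; field.
  by rewrite !gt_eqF.
have hS : 0 < (nR + 2 * S1) / C by rewrite -S0E S0_pos.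
have [hg1 [hE hF]] := alg_kernel C_pos n_pos (rr_pos (isT : (0 <= l)%N))
   (rr_pos (isT : (1 <= l)%N)) ha0 ha1 hS D_pos hG01 hI1 hI2 he.
have hg0 : G e 0 = 0.
  move: hG01; rewrite hg1 mulr0 addr0 => /eqP; rewrite mulf_eq0.
  by rewrite (gt_eqF (rr_pos (isT : (0 <= l)%N))) /= => /eqP.
have tau0 : tau = 0.
  move: hg0; rewrite /G hE hF e0 !mulr0 subr0 add0r => /eqP.
  by rewrite mulf_eq0 (gt_eqF ha0) oppr_eq0 /= => /eqP.
apply/matrixP => i j; rewrite ord1 !mxE.
have := GA j; rewrite /G hE hF e2 tau0 subr0 !mulr0 subr0 add0r => /eqP.
by rewrite mulf_eq0 (gt_eqF (a_pos (jle j))) /= => /eqP.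
Qed.


Let dl := rr 0 * rr 1 * (mu_ 1 - mu_ 0) / (a 0 * a 1).
Let D := 1 + nR - nR * S1 / 2.
Let Es := (nR + 2) * dl / D.
Let Fs := C * dl * (nR + 1) / D.
Let Gs k := if k == 0%N then - rr 1 else if k == 1%N then rr 0 else 0.
Let es k := (Fs - (C - mu_ k) * Es + Gs k) / a k.

Lemma nz_facts : [/\ C != 0, a 0 != 0, a 1 != 0, D != 0 & (1 + nR) * 2 - nR * S1 != 0].
Proof.
have hD := D_pos; have hD' : 0 < D := D_pos.
split; rewrite ?gt_eqF ?C_pos ?a_pos //; lra.
Qed.

Lemma Ev_es : Ev es = Es.
Proof.
transitivity (\sum_(k < l.+1) ((Fs - Es * C / 2) * (rr k / a k) - (Es / 2) * rr k
    + rr k * Gs k / a k)).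
  apply: eq_bigr => k _; have hk := a_neq0 (ltn_ord k : (k <= l)%N).
  rewrite /es; rewrite /a in hk *; field => //.
rewrite big_split sumrB /= -!mulr_sumr sum_r -/S0.
rewrite (sum_split (fun k => rr k * Gs k / a k)) big1 ?addr0 //; last first.
  by move=> j _; rewrite /Gs /= mulr0 mul0r.
rewrite S0E /Gs /= /Es /Fs /dl -/D.
have [nC na0 na1 nD nD2] := nz_facts.
rewrite /D /a; rewrite /a in na0 na1; field; rewrite ?nC ?na0 ?na1 ?nD ?nD2 //.
Qed.

Lemma Fv_es : Fv es = Fs.
Proof.
transitivity (\sum_(k < l.+1) ((Fs - Es * C / 2) * (rr k * mu_ k / a k)
    - (Es / 2) * (rr k * mu_ k) + rr k * mu_ k * Gs k / a k)).
  apply: eq_bigr => k _; have hk := a_neq0 (ltn_ord k : (k <= l)%N).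
  rewrite /es; rewrite /a in hk *; field => //.
rewrite big_split sumrB /= -!mulr_sumr sum_rmu -/S1.
rewrite (sum_split (fun k => rr k * mu_ k * Gs k / a k)) big1 ?addr0 //; last first.
  by move=> j _; rewrite /Gs /= mulr0 mul0r.
rewrite /Gs /= /Es /Fs /dl -/D.
have [nC na0 na1 nD nD2] := nz_facts.
rewrite /D /a; rewrite /a in na0 na1; field; rewrite ?nC ?na0 ?na1 ?nD ?nD2 //.
Qed.

Lemma G_es k : (k <= l)%N -> G es k = Gs k.
Proof.
move=> hk; have := a_neq0 hk; rewrite /G Ev_es Fv_es /es => h; field => //.
Qed.


Lemma t_pos : 0 < es 1 - es 0.
Proof.
have [nC na0 na1 nD nD2] := nz_facts.
have hC := C_pos; have hn := n_pos.
have ha0 := a_pos (isT : (0 <= l)%N); have ha1 := a_pos (isT : (1 <= l)%N).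
have hr0 := rr_pos (isT : (0 <= l)%N); have hr1 := rr_pos (isT : (1 <= l)%N).
have hD' : 0 < D := D_pos.
have -> : es 1 - es 0 = rr 0 / a 1 + rr 1 / a 0
   + (mu_ 1 - mu_ 0)^+2 * (rr 0 * rr 1 * C * nR) / ((a 0 ^+2 * a 1 ^+2) * D).
  rewrite /es /Gs /= /Es /Fs /dl /D /a; rewrite /a in na0 na1.
  by field; rewrite ?nC ?na0 ?na1 ?nD ?nD2.
have hA : 0 < rr 0 / a 1 by apply: divr_gt0.
have hB : 0 < rr 1 / a 0 by apply: divr_gt0.
have : 0 <= (mu_ 1 - mu_ 0)^+2 * (rr 0 * rr 1 * C * nR) / ((a 0 ^+2 * a 1 ^+2) * D).
  apply: divr_ge0; apply: mulr_ge0; first exact: sqr_ge0.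
      by apply: mulr_ge0; [apply: mulr_ge0; [apply: mulr_ge0|]|]; exact: ltW.
    by apply: mulr_ge0; exact: sqr_ge0.
  exact: ltW.
lra.
Qed.

Lemma sum_a1es : \sum_(k < l.+1) alpha1 l r d c k * es k = 0.
Proof.
rewrite a1e Ev_es Fv_es /Es /Fs.
have [nC na0 na1 nD nD2] := nz_facts.
by rewrite /D; field; rewrite ?nD2.
Qed.

Lemma Au (i : 'I_m.+1) :
  \sum_(j < m.+1) Amx l r d c i j * (es j.+2 - es 0) =
  - (es 1 - es 0) * (alpha2 l r d c i.+2 1 - alpha1 l r d c 1 * alpha1 l r d c i.+2 / alpha0 l r d c).
Proof.
have A0n : alpha0 l r d c != 0 by rewrite gt_eqF // alpha0_pos.
set A0 := alpha0 l r d c.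
transitivity (\sum_(j < m.+1) (alpha2 l r d c i.+2 j.+2 * es j.+2
     - es 0 * alpha2 l r d c i.+2 j.+2
     - (alpha1 l r d c i.+2 / A0) * (alpha1 l r d c j.+2 * es j.+2)
     + (alpha1 l r d c i.+2 / A0 * es 0) * alpha1 l r d c j.+2)).
  by apply: eq_bigr => j _; rewrite AmxE -/A0; ring.
rewrite big_split sumrB sumrB /= -!mulr_sumr.
have h1 := a2e es (jle i); rewrite G_es ?jle // /Gs /= mulr0 in h1.
rewrite (sum_split (fun k => alpha2 l r d c i.+2 k * es k)) in h1.
have h2 := sum_a2 (jle i); rewrite (sum_split (fun k => alpha2 l r d c i.+2 k)) in h2.
have h3 := sum_a1es; rewrite (sum_split (fun k => alpha1 l r d c k * es k)) in h3.
have h4 := sum_a1; rewrite (sum_split (fun k => alpha1 l r d c k)) -/A0 in h4.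
set X1 := \sum_(j < m.+1) alpha2 l r d c i.+2 j.+2 * es j.+2 in h1 *.
set X2 := \sum_(j < m.+1) alpha2 l r d c i.+2 j.+2 in h2 *.
set X3 := \sum_(j < m.+1) alpha1 l r d c j.+2 * es j.+2 in h3 *.
set X4 := \sum_(j < m.+1) alpha1 l r d c j.+2 in h4 *.
have -> : X1 = - (alpha2 l r d c i.+2 0 * es 0 + alpha2 l r d c i.+2 1 * es 1).
  by apply/eqP; rewrite -addr_eq0 addrC h1.
have -> : X2 = alpha1 l r d c i.+2 - alpha2 l r d c i.+2 0 - alpha2 l r d c i.+2 1.
  by rewrite -h2; ring.
have -> : X3 = - (alpha1 l r d c 0 * es 0 + alpha1 l r d c 1 * es 1).
  by apply/eqP; rewrite -addr_eq0 addrC h3.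
have -> : X4 = A0 - alpha1 l r d c 0 - alpha1 l r d c 1.
  by rewrite -h4; ring.
by field.
Qed.


Lemma Ffrak_formula : Ffrak l r d g c =
  alpha0 l r d c * (Q * ((nR * (nR - 1) * c + 2 * (1 - g%:R)) * Es - nR * Fs))
  / (es 1 - es 0).
Proof.
have A0n : alpha0 l r d c != 0 by rewrite gt_eqF // alpha0_pos.
have tn : es 1 - es 0 != 0 by rewrite gt_eqF // t_pos.
pose ucol : 'cV[R]_(m.+1) := \col_j (es j.+2 - es 0).
pose acol : 'cV[R]_(m.+1) := \col_j (alpha2 l r d c j.+2 1
     - alpha1 l r d c 1 * alpha1 l r d c j.+2 / alpha0 l r d c).
have hA : Amx l r d c *m ucol = - (es 1 - es 0) *: acol.
  apply/matrixP => i j; rewrite ord1 !mxE -Au.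
  by apply: eq_bigr => k _; rewrite !mxE.
have hinv : invmx (Amx l r d c) *m acol = - (es 1 - es 0)^-1 *: ucol.
  have -> : acol = - (es 1 - es 0)^-1 *: (Amx l r d c *m ucol).
    by rewrite hA scalerA mulNr mulrN mulVf // opprK scale1r.
  by rewrite -scalemxAr mulKmx // Amx_unit.
rewrite /Ffrak.
rewrite exchange_big /=.
under eq_bigr => s _.
  rewrite (eq_bigr (fun j => (alpha0 l r d c * beta1 l r d g c s.+2
      - alpha1 l r d c s.+2 * beta0 l r d g c) * (invmx (Amx l r d c) s j * acol j 0)));
    last by move=> j _; rewrite !mxE; ring.
  rewrite -mulr_sumr.
  have -> : \sum_(j < m.+1) invmx (Amx l r d c) s j * acol j 0
      = (invmx (Amx l r d c) *m acol) s 0 by rewrite mxE.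
  rewrite hinv !mxE.
  over.
rewrite /=.
set A0 := alpha0 l r d c; set B0 := beta0 l r d g c; set t := es 1 - es 0.
transitivity (A0 * beta1 l r d g c 1 - alpha1 l r d c 1 * B0 -
  \sum_(s < m.+1) (- t^-1) * (A0 * (beta1 l r d g c s.+2 * es s.+2)
     - (A0 * es 0) * beta1 l r d g c s.+2 - B0 * (alpha1 l r d c s.+2 * es s.+2)
     + (B0 * es 0) * alpha1 l r d c s.+2)).
  by congr (_ - _); apply: eq_bigr => s _; ring.
rewrite -mulr_sumr big_split sumrB sumrB /= -!mulr_sumr.
have h1 := b1e es; rewrite Ev_es Fv_es (sum_split (fun k => beta1 l r d g c k * es k)) in h1.
have h2 := sum_b1; rewrite (sum_split (fun k => beta1 l r d g c k)) -/B0 in h2.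
have h3 := sum_a1es; rewrite (sum_split (fun k => alpha1 l r d c k * es k)) in h3.
have h4 := sum_a1; rewrite (sum_split (fun k => alpha1 l r d c k)) -/A0 in h4.
set X1 := \sum_(j < m.+1) beta1 l r d g c j.+2 * es j.+2 in h1 *.
set X2 := \sum_(j < m.+1) beta1 l r d g c j.+2 in h2 *.
set X3 := \sum_(j < m.+1) alpha1 l r d c j.+2 * es j.+2 in h3 *.
set X4 := \sum_(j < m.+1) alpha1 l r d c j.+2 in h4 *.
have -> : X1 = Q * ((nR * (nR - 1) * c + 2 * (1 - g%:R)) * Es - nR * Fs)
   - (beta1 l r d g c 0 * es 0 + beta1 l r d g c 1 * es 1).
  by rewrite -h1; ring.
have -> : X2 = B0 - beta1 l r d g c 0 - beta1 l r d g c 1.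
  by rewrite -h2; ring.
have -> : X3 = - (alpha1 l r d c 0 * es 0 + alpha1 l r d c 1 * es 1).
  by apply/eqP; rewrite -addr_eq0 addrC h3.
have -> : X4 = A0 - alpha1 l r d c 0 - alpha1 l r d c 1.
  by rewrite -h4; ring.
rewrite /t; field.
by rewrite -/t tn.
Qed.


Lemma main_sec :
    (exists Phi : R, 0 < Phi /\
       Ffrak l r d g c = (mu_ 0 - mu_ 1) * Phi)
    /\ (0 < Ffrak l r d g c -> mu_ 1 < mu_ 0).
Proof.
have [nC na0 na1 nD nD2] := nz_facts.
have hC := C_pos; have hn := n_pos; have hc := c_pos.
have ha0 := a_pos (isT : (0 <= l)%N); have ha1 := a_pos (isT : (1 <= l)%N).
have hr0 := rr_pos (isT : (0 <= l)%N); have hr1 := rr_pos (isT : (1 <= l)%N).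
have hD' : 0 < D := D_pos.
have ht := t_pos.
have hkap : 0 < 2 * nR * c - 2 * (1 - g%:R).
  have : 1 <= g%:R :> R by rewrite ler1n.
  have := mulr_gt0 hn hc; lra.
pose Phi := alpha0 l r d c * Q * (nR + 2) * (rr 0 * rr 1) * (2 * nR * c - 2 * (1 - g%:R))
   / (a 0 * a 1 * D * (es 1 - es 0)).
have hPhi : 0 < Phi.
  rewrite /Phi; apply: divr_gt0.
    apply: mulr_gt0 => //; apply: mulr_gt0; last exact: mulr_gt0.
    apply: mulr_gt0; [apply: mulr_gt0; [exact: alpha0_pos | exact: Q_pos] | lra].
  by apply: mulr_gt0 => //; apply: mulr_gt0 => //; apply: mulr_gt0.
have hF : Ffrak l r d g c = (mu_ 0 - mu_ 1) * Phi.
  rewrite Ffrak_formula /Phi /Es /Fs /dl /C.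
  have tn : es 1 - es 0 != 0 by rewrite gt_eqF.
  move: tn na0 na1 nD nD2; rewrite /D /a /C => tn na0' na1' nD' nD2'.
  field; rewrite tn /= -/nR (addrC 2 nR) -nR2 -/C -/(a 0) -/(a 1).
  by have [_ n0 n1 _ n2] := nz_facts; rewrite n0 n1 n2.
split; first by exists Phi.
rewrite hF pmulr_lgt0 // subr_gt0 //.
Qed.

End Main.

Theorem proposition3p19 (R : realType) (l : nat) (r : nat -> nat)
    (d : nat -> int) (g : nat) :
  (2 <= l)%N ->
  (forall k, (k <= l)%N -> (1 <= r k)%N) ->
  (\sum_(k < l.+1) d k = 0)%R ->
  (1 <= g)%N ->
  forall c : R, (forall k, (k <= l)%N -> mu r d k < c) ->
    (exists Phi : R, 0 < Phi /\
       Ffrak l r d g c = (mu r d 0 - mu r d 1) * Phi)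
    /\ (0 < Ffrak l r d g c -> @mu R r d 1 < @mu R r d 0).
Proof.
case: l => [|[|m]] // _ Hr Hd Hg c Hc.
exact: main_sec.
Qed.
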